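(* Let $A$ be a subset of the nonnegative real numbers which is well ordered (for the usual order) and which has an accumulation point in $\mathbb R$ for the Euclidean topology. For a positive integer $m$ let $mA=\{x_1+\cdots+x_m\mid x_1,\dots,x_m\in A\}$. Then for every positive integer $m$, $mA$ contains a well ordered subset of ordinal type $\omega^m$.
   Context: $\omega$ denotes the ordinal type of $\mathbb N$ with its usual order. *)

(* Defs.v *)
From Stdlib Require Import Reals List Lra Lia.
Open Scope R_scope.

Definition well_ordered (A : R -> Prop) : Prop :=
  forall B : R -> Prop, (forall x, B x -> A x) -> (exists x, B x) ->
    exists x, B x /\ forall y, B y -> x <= y.

Definition has_accumulation_point (A : R -> Prop) : Prop :=
  exists p : R, forall eps : R, 0 < eps ->
    exists a : R, A a /\ a <> p /\ Rabs (a - p) < eps.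

Fixpoint lsum (l : list R) : R :=
  match l with nil => 0 | x :: l' => x + lsum l' end.

Definition sumset (m : nat) (A : R -> Prop) (y : R) : Prop :=
  exists l : list R, length l = m /\ Forall A l /\ lsum l = y.

(* Strict lexicographic order on sequences of naturals (first entry most significant).
   On sequences of length m this is the well-order of ordinal type omega^m. *)
Fixpoint lex_lt (s t : list nat) : Prop :=
  match s, t with
  | a :: s', b :: t' => (a < b)%nat \/ (a = b /\ lex_lt s' t')
  | _, _ => False
  end.

(* S has a subset of ordinal type omega^m: there is a strictly increasing
   (hence order-isomorphic onto its image) map from (N^m, lex) into S. *)
Definition contains_omega_pow (m : nat) (S : R -> Prop) : Prop :=
  exists f : list nat -> R,
    (forall s, length s = m -> S (f s)) /\
    (forall s t, length s = m -> length t = m -> lex_lt s t -> f s < f t).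

(* Main.v *)
Require Import Defs.
From Stdlib Require Import Reals List.
From Stdlib Require Import Lra Lia Classical IndefiniteDescription.
Open Scope R_scope.

Lemma gen_choice (X Y : Type) (Q : X -> Y -> Prop) :
  (forall x, exists y, Q x y) -> exists G : X -> Y, forall x, Q x (G x).
Proof.
  intro H. exists (fun x => proj1_sig (constructive_indefinite_description _ (H x))).
  intro x. exact (proj2_sig (constructive_indefinite_description _ (H x))).
Qed.

Lemma approach_below (A : R -> Prop) (Hwo : well_ordered A)
  (Hacc : has_accumulation_point A) :
  exists L, forall e, 0 < e -> exists a, A a /\ L - e < a < L.
Proof.
  destruct Hacc as [p Hp]. exists p.
  apply NNPP; intro Hn.
  apply not_all_ex_not in Hn as [e He].
  apply imply_to_and in He as [He Hne].
  destruct (Hwo (fun a => A a /\ p < a < p + e)) as [x [[Ax Bx] Hmin]].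
  - intros x [Ax _]; exact Ax.
  - destruct (Hp e He) as [a [Aa [Hap Habs]]].
    exists a. split; [exact Aa|].
    destruct (Rlt_or_le a p) as [Hlt|Hle].
    + exfalso; apply Hne; exists a. split; [exact Aa|].
      rewrite Rabs_left in Habs by lra. lra.
    + assert (a <> p) by exact Hap.
      rewrite Rabs_right in Habs by lra. lra.
  - destruct (Hp (Rmin e (x - p))) as [a [Aa [Hap Habs]]].
    { apply Rmin_pos; lra. }
    pose proof (Rmin_l e (x - p)). pose proof (Rmin_r e (x - p)).
    destruct (Rlt_or_le a p) as [Hlt|Hle].
    + apply Hne; exists a. split; [exact Aa|].
      rewrite Rabs_left in Habs by lra. lra.
    + rewrite Rabs_right in Habs by lra.
      assert (a <> p) by exact Hap.
      assert (Hx : x <= a) by (apply Hmin; split; [exact Aa| lra]).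
      lra.
Qed.

Lemma seq_exists (A : R -> Prop) (L : R)
  (HL : forall e, 0 < e -> exists a, A a /\ L - e < a < L) (eps : R) :
  0 < eps ->
  exists c : nat -> R, (forall n, A (c n) /\ L - eps < c n < L) /\
    (forall n, c n < c (S n)).
Proof.
  intro He.
  destruct (gen_choice R R (fun x y => x < L -> A y /\ Rmax x (L - eps) < y < L))
    as [h Hh].
  { intro x. destruct (Rlt_or_le x L) as [Hx|Hx].
    - destruct (HL (Rmin (L - x) eps)) as [a [Aa Ha]].
      { apply Rmin_pos; lra. }
      exists a. intros _. split; [exact Aa|].
      pose proof (Rmin_l (L - x) eps). pose proof (Rmin_r (L - x) eps).
      split; [|lra]. apply Rmax_lub_lt; lra.
    - exists 0. intro; lra. }
  set (c := fix c n := match n with O => h (L - eps / 2) | S k => h (c k) end).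
  assert (Hc : forall n, A (c n) /\ L - eps < c n < L).
  { induction n as [|n IH]; simpl.
    - destruct (Hh (L - eps/2)) as [A1 [B1 C1]]; [lra|].
      pose proof (Rmax_r (L - eps/2) (L - eps)). split; [exact A1|lra].
    - destruct IH as [_ [I1 I2]].
      destruct (Hh (c n)) as [A1 [B1 C1]]; [lra|].
      pose proof (Rmax_r (c n) (L - eps)). split; [exact A1|lra]. }
  exists c. split; [exact Hc|].
  intro n. simpl. destruct (Hc n) as [_ [_ I2]].
  destruct (Hh (c n)) as [_ [B1 _]]; [lra|].
  pose proof (Rmax_l (c n) (L - eps)). lra.
Qed.

Lemma incr_le (c : nat -> R) : (forall n, c n < c (S n)) ->
  forall i j, (i <= j)%nat -> c i <= c j.
Proof.
  intros H i j Hij. induction Hij; [lra|]. specialize (H m). lra.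
Qed.

Definition Good (A : R -> Prop) (L : R) (m : nat) (eps : R) (g : list nat -> R) :=
  (forall s, length s = S m -> sumset (S m) A (g s) /\
      INR (S m) * L - eps < g s < INR (S m) * L) /\
  (forall s t, length s = S m -> length t = S m -> lex_lt s t -> g s < g t).

Lemma good_all (A : R -> Prop) (L : R)
  (HL : forall e, 0 < e -> exists a, A a /\ L - e < a < L) :
  forall m eps, 0 < eps -> exists g, Good A L m eps g.
Proof.
  induction m as [|m IH]; intros eps He.
  - destruct (seq_exists A L HL eps He) as [c [Hc Hinc]].
    exists (fun s => c (hd O s)). split.
    + intros s Hs. destruct s as [|i [|j s]]; simpl in Hs; try discriminate.
      simpl. destruct (Hc i) as [Ai Bi]. split.
      * exists (c i :: nil). simpl. split; [reflexivity|]. split.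
        -- constructor; [exact Ai| constructor].
        -- ring.
      * lra.
    + intros s t Hs Ht Hl.
      destruct s as [|i [|i' s]]; simpl in Hs; try discriminate.
      destruct t as [|j [|j' t]]; simpl in Ht; try discriminate.
      simpl in Hl. destruct Hl as [Hl|[_ F]]; [|contradiction].
      simpl. pose proof (incr_le c Hinc (S i) j Hl). specialize (Hinc i). lra.
  - destruct (seq_exists A L HL (eps/2)) as [c [Hc Hinc]]; [lra|].
    destruct (gen_choice nat (list nat -> R)
      (fun i g => Good A L m (Rmin (eps/2) (c (S i) - c i)) g)) as [G HG].
    { intro i. apply IH. apply Rmin_pos; [lra|]. specialize (Hinc i); lra. }
    exists (fun s => match s with nil => 0 | i :: s' => c (S i) + G i s' end).
    split.
    + intros s Hs. destruct s as [|i s']; simpl in Hs; try discriminate.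
      injection Hs as Hs.
      destruct (HG i) as [H1 _]. destruct (H1 s' Hs) as [[l [Hl1 [Hl2 Hl3]]] Hb].
      destruct (Hc (S i)) as [Ai Bi].
      pose proof (Rmin_l (eps/2) (c (S i) - c i)).
      split.
      * exists (c (S i) :: l). simpl. rewrite Hl1, Hl3. split; [reflexivity|].
        split; [constructor; assumption| reflexivity].
      * rewrite S_INR. lra.
    + intros s t Hs Ht Hl.
      destruct s as [|i s']; simpl in Hs; try discriminate.
      destruct t as [|j t']; simpl in Ht; try discriminate.
      injection Hs as Hs. injection Ht as Ht.
      simpl in Hl. destruct Hl as [Hl|[<- Hl]].
      * destruct (HG i) as [H1 _]. destruct (H1 s' Hs) as [_ Hb1].
        destruct (HG j) as [H2 _]. destruct (H2 t' Ht) as [_ Hb2].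
        pose proof (Rmin_r (eps/2) (c (S j) - c j)).
        pose proof (incr_le c Hinc (S i) j Hl). lra.
      * destruct (HG i) as [_ H2]. specialize (H2 s' t' Hs Ht Hl). lra.
Qed.

Theorem mainTheorem4 (A : R -> Prop)
  (Hnn : forall x, A x -> 0 <= x)
  (Hwo : well_ordered A)
  (Hacc : has_accumulation_point A) :
  forall m : nat, (1 <= m)%nat -> contains_omega_pow m (sumset m A).
Proof.
  intros m Hm. destruct m as [|m]; [lia|].
  destruct (approach_below A Hwo Hacc) as [L HL].
  destruct (good_all A L HL m 1) as [g [H1 H2]]; [lra|].
  exists g. split.
  - intros s Hs. exact (proj1 (H1 s Hs)).
  - exact H2.
Qed.
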